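(* Let $G$ be a classical algebraic group over an algebraically closed field $k$ with natural module $V$ of dimension $n$. Let $C_1,\dots,C_e$ be conjugacy classes of $G$, $\Omega=C_1\times\dots\times C_e$, and let $\gamma_i$ be the dimension of the largest eigenspace on $V$ of an element of $C_i$. If $\sum_{i=1}^e\gamma_i>n(e-1)$, then no tuple $(x_1,\dots,x_e)\in\Omega$ generates a Zariski dense subgroup of $G$. *)

(* Defs.v *)
From HB Require Import structures.
From mathcomp Require Import all_boot all_order all_algebra.
From mathcomp Require Import mpoly.
Set Implicit Arguments. Unset Strict Implicit. Unset Printing Implicit Defensive.
Import GRing.Theory.
Local Open Scope ring_scope.

(* The three families of classical groups on the natural module V = k^n
   (column vectors), w.r.t. the standard forms. *)
Inductive classical_kind := SLkind | Spkind | SOkind.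

Section Classical.
Variable k : fieldType.
Variable n : nat.

Definition symp_form : 'M[k]_n :=
  \matrix_(i, j)
    (if (i < n./2)%N && (j == (i + n./2)%N :> nat) then 1
     else if (j < n./2)%N && (i == (j + n./2)%N :> nat) then -1 else 0).

(* standard quadratic form Q(v) = sum_{i<m} v_i v_{i+m} (+ v_{n-1}^2 if n odd),
   given by an upper-triangular matrix B, Q(v) = v^T B v. *)
Definition quad_mx : 'M[k]_n :=
  \matrix_(i, j)
    (((i < n./2)%N && (j == (i + n./2)%N :> nat))
     || [&& odd n, i == n.-1 :> nat & j == n.-1 :> nat])%:R.

Definition qform (v : 'cV[k]_n) : k := (v^T *m quad_mx *m v) 0 0.

Definition classical_group (t : classical_kind) (g : 'M[k]_n) : Prop :=
  g \in unitmx /\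
  match t with
  | SLkind => \det g = 1
  | Spkind => g^T *m symp_form *m g = symp_form
  | SOkind =>
      (forall v : 'cV[k]_n, qform (g *m v) = qform v) /\
      (* SO = identity component of O(Q): det = 1 if char k <> 2,
         Dickson invariant rank(1 - g) mod 2 = 0 if char k = 2 *)
      (if 2%N \in [pchar k] then ~~ odd (\rank (1%:M - g)) = true else \det g = 1)
  end.

Definition classical_admissible (t : classical_kind) : Prop :=
  match t with
  | SLkind => (2 <= n)%N
  | Spkind => (2 <= n)%N /\ ~~ odd n
  | SOkind => (3 <= n)%N /\ ~ (odd n /\ 2%N \in [pchar k])
  end.

Definition conj_class (G : 'M[k]_n -> Prop) (c : 'M[k]_n) : 'M[k]_n -> Prop :=
  fun y => exists2 g, G g & y = g *m c *m invmx g.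

Definition largest_eigdim (x : 'M[k]_n) (d : nat) : Prop :=
  (exists a : k, \rank (eigenspace x a) = d) /\
  (forall a : k, (\rank (eigenspace x a) <= d)%N).

Inductive gen_by (e : nat) (x : 'I_e -> 'M[k]_n) : 'M[k]_n -> Prop :=
  | gen_one : gen_by x 1%:M
  | gen_mul i h : gen_by x h -> gen_by x (x i *m h)
  | gen_inv i h : gen_by x h -> gen_by x (invmx (x i) *m h).

Definition mx_eval (p : {mpoly k[n * n]}) (A : 'M[k]_n) : k :=
  p.@[fun i => mxvec A 0 i].

(* S is Zariski dense in G (G is Zariski closed in M_n(k), so its Zariski
   topology is induced by polynomial functions in the matrix entries) *)
Definition zariski_dense (S G : 'M[k]_n -> Prop) : Prop :=
  forall p : {mpoly k[n * n]},
    (forall h, S h -> mx_eval p h = 0) -> forall g, G g -> mx_eval p g = 0.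

End Classical.

(* Main.v *)
Require Import Defs.
From HB Require Import structures.
From mathcomp Require Import all_boot all_order all_algebra.
From mathcomp Require Import mpoly.
From mathcomp Require Import zify ring.
Import GRing.Theory.
Local Open Scope ring_scope.

Section Gen.
Variable k : fieldType.
Variable n : nat.

Lemma cap_rank (e : nat) (E : 'I_e -> 'M[k]_n) :
  (\sum_(i<e) \rank (E i) + n <= \rank (\bigcap_(i < e) E i)%MS + n * e)%N.
Proof.
elim: e E => [|e IH] E.
  rewrite !big_ord0 mxrank1 muln0 add0n addn0 //=.
rewrite !big_ord_recr /=.
have := IH (fun i => E (widen_ord (leqnSn e) i)).
set X := (\bigcap_(i < e) _)%MS.
have h1 := mxrank_sum_cap X (E ord_max).
have h2 := rank_leq_col (X + E ord_max)%MS.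
move=> HH; rewrite mulnS; set q := (n * e)%N in HH *. move: h1 h2 HH. set r1 := \rank (X + _). set r2 := \rank (X :&: _). set r3 := \rank X. set r4 := \rank (E ord_max). set s := (\sum_(i < e) _)%N. lia.
Qed.

Lemma common_eigvec e (x : 'I_e -> 'M[k]_n) (a : 'I_e -> k) (gam : 'I_e -> nat) :
  (forall i, gam i <= \rank (eigenspace (x i) (a i)))%N ->
  (n * (e - 1) < \sum_(i < e) gam i)%N ->
  exists2 u : 'rV[k]_n, u != 0 & forall i, u *m x i = a i *: u.
Proof.
move=> hg hs.
case: e x a gam hg hs => [|e] x a gam hg hs; first by rewrite big_ord0 in hs.
have hc := @cap_rank e.+1 (fun i => eigenspace (x i) (a i)).
have hsum : (\sum_(i<e.+1) gam i <= \sum_(i<e.+1) \rank (eigenspace (x i) (a i)))%N.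
  by apply: leq_sum.
set M := (\bigcap_(i < e.+1) eigenspace (x i) (a i))%MS.
have hM : M != 0.
  rewrite -mxrank_eq0; move: hc hsum hs; rewrite -/M.
  rewrite subn1 /= mulnS.
  set q := (n * e)%N; set s1 := (\sum_(i < e.+1) gam i)%N.
  set s2 := (\sum_(i < e.+1) _)%N; set r := \rank M. lia.
case: (pickP (fun i => row i M != 0)) => [i hi|h0]; last first.
  case/negP: hM; apply/eqP/row_matrixP => i; rewrite row0; apply/eqP.
  by move: (h0 i) => /negbFE.
exists (row i M) => // l.
apply/eigenspaceP.
have := row_sub i M.
move/sub_bigcapmxP => /(_ l isT) //.
Qed.

Lemma gen_eig e (x : 'I_e -> 'M[k]_n) (a : 'I_e -> k) (u : 'rV[k]_n) :
  u != 0 -> (forall i, x i \in unitmx) -> (forall i, u *m x i = a i *: u) ->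
  forall h, gen_by x h -> exists l : k, u *m h = l *: u.
Proof.
move=> u0 xu hx h; elim => [|i h' _ [l hl]|i h' _ [l hl]].
- by exists 1; rewrite mulmx1 scale1r.
- by exists (a i * l); rewrite mulmxA hx -scalemxAl hl scalerA.
- have ha : a i != 0.
    apply: contraNneq u0 => a0; have := hx i; rewrite a0 scale0r => h0.
    by rewrite -(mulmxK (xu i) u) h0 mul0mx.
  have hi : u *m invmx (x i) = (a i)^-1 *: u.
    by rewrite -{2}(mulmxK (xu i) u) hx -!scalemxAl scalerA mulVf // scale1r.
  by exists ((a i)^-1 * l); rewrite mulmxA hi -scalemxAl hl scalerA.
Qed.

Definition lpoly (u : 'rV[k]_n) (j l : 'I_n) : {mpoly k[n*n]} :=
  \sum_(r < n) ((u 0 r * u 0 j) *: 'X_(mxvec_index r l)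
                - (u 0 r * u 0 l) *: 'X_(mxvec_index r j)).

Lemma lpolyE u j l A :
  mx_eval (lpoly u j l) A = (u *m A) 0 l * u 0 j - (u *m A) 0 j * u 0 l.
Proof.
rewrite /mx_eval /lpoly raddf_sum /= !mxE !big_distrl /= -sumrB.
apply: eq_bigr => r _; rewrite mevalB !mevalZ !mevalXU !mxvecE; ring.
Qed.

Lemma conj_eig (g c : 'M[k]_n) a : g \in unitmx ->
  (\rank (eigenspace c a) <= \rank (eigenspace (g *m c *m invmx g) a))%N.
Proof.
move=> gu; rewrite -(mxrankMfree (eigenspace c a) (_ : row_free (invmx g))); last first.
  by rewrite row_free_unit unitmx_inv.
apply: mxrankS; apply/eigenspaceP.
rewrite !mulmxA mulmxKV //.
have /eigenspaceP -> := submx_refl (eigenspace c a).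
by rewrite scalemxAl.
Qed.

End Gen.
Arguments cap_rank {k n e}.
Arguments common_eigvec {k n e x a gam}.
Arguments gen_eig {k n e x a u}.
Arguments lpoly {k n}.
Arguments lpolyE {k n}.
Arguments conj_eig {k n g c a}.

Section Key.
Variable k : fieldType.
Variable n : nat.
Local Notation M := ('M[k]_n).

Lemma mul_dr m p (A : 'M[k]_(m, n)) (r : 'I_n) (s : 'I_p) x y :
  (A *m delta_mx r s) x y = A x r * (s == y)%:R.
Proof.
rewrite mxE (bigD1 r) //= big1 ?addr0; first by rewrite mxE eqxx /= eq_sym.
by move=> i /negPf hi; rewrite mxE hi mulr0.
Qed.

Lemma mul_dl m p (A : 'M[k]_(n, p)) (r : 'I_m) (s : 'I_n) x y :
  (delta_mx r s *m A) x y = (x == r)%:R * A s y.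
Proof.
rewrite mxE (bigD1 s) //= big1 ?addr0; first by rewrite mxE eqxx andbT.
by move=> i /negPf hi; rewrite mxE hi andbF mul0r.
Qed.

Definition tv (r s : 'I_n) (c : k) : M := 1%:M + c *: delta_mx r s.

Lemma det_tv r s c : r != s -> \det (tv r s c) = 1.
Proof.
have H : forall r s : 'I_n, (s < r)%N -> \det (tv r s c) = 1.
  move=> r0 s0 hlt; rewrite det_trig.
    apply: big1 => i _; rewrite !mxE eqxx.
    have -> : ((i == r0) && (i == s0)) = false.
      by apply/negbTE; apply/negP => /andP [/eqP -> /eqP h]; move: hlt; rewrite h ltnn.
    by rewrite mulr0 addr0.
  apply/forallP => i; apply/forallP => j; apply/implyP => hij.
  rewrite !mxE.
  have -> : (i == j) = false by apply/negbTE; rewrite neq_ltn hij.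
  have -> : ((i == r0) && (j == s0)) = false.
    apply/negbTE; apply/negP => /andP [/eqP hi /eqP hj]; subst; lia.
  by rewrite mulr0 addr0.
move=> rs; case: (ltngtP r s) => h.
- rewrite -det_tr /tv linearD /= trmx1 linearZ /= trmx_delta; exact: H.
- exact: H.
- by move: rs; rewrite (val_inj h) eqxx.
Qed.

Lemma tv_tr r s c : (tv r s c)^T = tv s r c.
Proof. by apply/matrixP => x y; rewrite !mxE eq_sym andbC. Qed.

Lemma unit_det1 (g : M) : \det g = 1 -> g \in unitmx.
Proof. by move=> h; rewrite unitmxE h unitr1. Qed.

Lemma rowtv (u : 'rV[k]_n) r s c l :
  (u *m tv r s c) 0 l = u 0 l + c * u 0 r * (s == l)%:R.
Proof.
by rewrite /tv mulmxDr mulmx1 -scalemxAr mxE [X in _ + X]mxE mul_dr mulrA.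
Qed.

Lemma mxrankN' m p (A : 'M[k]_(m, p)) : \rank (- A) = \rank A.
Proof.
apply/eqP; rewrite eqn_leq; apply/andP; split.
  by rewrite -scaleN1r; exact: mxrank_scale.
by rewrite -[X in (\rank X <= _)%N](opprK A) -[X in (\rank X <= _)%N]scaleN1r; exact: mxrank_scale.
Qed.

Lemma rank2 (r1 r2 s1 s2 : 'I_n) : r1 != r2 -> s1 != s2 ->
  \rank (delta_mx r1 s1 - delta_mx r2 s2 : M) = 2%N.
Proof.
move=> hr hs; apply/eqP; rewrite eqn_leq; apply/andP; split.
  apply: leq_trans (mxrank_add _ _) _; rewrite mxrankN' !mxrank_delta //.
set N := (_ - _ : M).
pose R : 'M[k]_(2, n) := delta_mx 0 r1 + delta_mx 1 r2.
pose C : 'M[k]_(n, 2) := delta_mx s1 0 - delta_mx s2 1.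
have e : R *m N *m C = 1%:M.
  have h1 := negPf hr; have h2 := negPf hs.
  have h1' : (r2 == r1) = false by rewrite eq_sym.
  have h2' : (s2 == s1) = false by rewrite eq_sym.
  rewrite /R /N /C !(mulmxDl, mulmxDr, mulmxBl, mulmxBr, mulmxN, mulNmx).
  do 3! rewrite ?mul_delta_mx_cond ?eqxx ?h1 ?h2 ?h1' ?h2' ?mulr1n ?mulr0n ?mul0mx ?mulmx0.
  apply/matrixP => i j; rewrite !mxE !(subr0, oppr0, add0r, addr0, sub0r, opprK).
  case: i j => [[|[|i]] hi] [[|[|j]] hj] //=; rewrite ?mulr0n ?mulr1n ?addr0 ?add0r ?opprK ?oppr0 ?subr0 //.
have := mxrankM_maxl (R *m N) C; rewrite e mxrank1 => h.
apply: leq_trans h _; exact: mxrankM_maxr.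
Qed.


Lemma half_eq : n = (n./2 + n./2 + odd n)%N.
Proof. rewrite -{1}(odd_double_half n) -addnn; lia. Qed.

Definition pn (j : 'I_n) : nat := if (j < n./2)%N then (j + n./2)%N else (j - n./2)%N.

Lemma pn_lt (j : 'I_n) : (pn j < n)%N.
Proof. have := half_eq; have := ltn_ord j; rewrite /pn; case: ifP => h; lia. Qed.

Definition pt (j : 'I_n) : 'I_n := Ordinal (pn_lt j).

Lemma pt_pt (j : 'I_n) : (j < n./2 + n./2)%N -> pt (pt j) = j.
Proof.
move=> h; apply: val_inj => /=; rewrite /pn /= /pn; case: (ltnP j n./2) => h1.
  by rewrite ifF ?addnK //; apply/negbTE; rewrite -leqNgt leq_addl.
rewrite ifT ?subnK //; lia.
Qed.

Ltac ifs := repeat (case: ifP => ?); move=> *; try (exfalso; lia); try done.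

Section Sp.
Hypothesis he : ~~ odd n.
Hypothesis n2 : (1 < n)%N.
Variable j : 'I_n.
Local Notation J := (symp_form k n).
Local Notation b := (pt j).

Lemma Jjj : J j j = 0.
Proof. have := n2; have := half_eq; move: he; rewrite mxE /=; case: (odd n) => //= _; ifs. Qed.

Lemma Jjy y : y != b -> J j y = 0.
Proof.
move=> /eqP hy; have hy' : (y : nat) <> pn j by move=> e; apply: hy; apply: val_inj.
move: hy'; have := n2; have := half_eq; move: he; rewrite mxE /pn; case: (odd n) => //= _; ifs.
Qed.

Lemma Jxj x : x != b -> J x j = 0.
Proof.
move=> /eqP hy; have hy' : (x : nat) <> pn j by move=> e; apply: hy; apply: val_inj.
move: hy'; have := n2; have := half_eq; move: he; rewrite mxE /pn; case: (odd n) => //= _; ifs.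
Qed.

Lemma Jjb : J j b + J b j = 0.
Proof.
have := n2; have := half_eq; move: he; rewrite !mxE /=  /pn; case: (odd n) => //= _; ifs;
  by rewrite ?addNr ?addrN ?addr0.
Qed.

Lemma sp_tv : classical_group Spkind (tv j b 1).
Proof.
have bj : b != j.
  apply/eqP => e; have : pn j = j by rewrite -[in RHS]e.
  have := n2; have := half_eq; move: he; rewrite /pn; case: (odd n) => //= _; ifs.
split; first by apply: unit_det1; apply: det_tv; rewrite eq_sym.
rewrite tv_tr /tv !scale1r.
rewrite !(mulmxDl, mulmxDr) !mul1mx !mulmx1.
apply/matrixP => x y; rewrite ![((_ + _ : 'M[k]_n) x y)]mxE. rewrite !(mul_dr _ n) !(mul_dl n n).
case: (eqVneq x b) => [->|xb]; case: (eqVneq b y) => [<-|yb].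
- by have e := Jjb; rewrite Jjj /= !mul1r !mulr1 addr0 -addrA e addr0.
- have yb' : y != b by rewrite eq_sym.
  rewrite (Jjy _ yb') /=; ring.
- rewrite (Jxj _ xb) /=; ring.
- rewrite /=; ring.
Qed.

End Sp.

Ltac ix := rewrite -?val_eqE /=; (try rewrite /pn /=); (try rewrite /pn /=); repeat (case: ifP => ?); move=> *; lia.

Section SO.
Local Notation Q := (quad_mx k n).
Definition bil (v w : 'cV[k]_n) : k := (v^T *m Q *m w) 0 0.
Definition ev (r : 'I_n) : 'cV[k]_n := delta_mx r 0.

Lemma bilDl v1 v2 w : bil (v1 + v2) w = bil v1 w + bil v2 w.
Proof. by rewrite /bil [(_ + _)^T]linearD /= !mulmxDl mxE. Qed.
Lemma bilDr v w1 w2 : bil v (w1 + w2) = bil v w1 + bil v w2.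
Proof. by rewrite /bil !mulmxDr mxE. Qed.
Lemma bilZl a v w : bil (a *: v) w = a * bil v w.
Proof. by rewrite /bil [(_ *: _)^T]linearZ /= -!scalemxAl mxE. Qed.
Lemma bilZr a v w : bil v (a *: w) = a * bil v w.
Proof. by rewrite /bil -scalemxAr mxE. Qed.
Lemma bil_ee r s : bil (ev r) (ev s) = Q r s.
Proof. by rewrite /bil /ev trmx_delta (mul_dr _ 1) (mul_dl _ n) !eqxx mulr1 mul1r. Qed.
Lemma bil_ev r v : bil (ev r) v = \sum_y Q r y * v y 0.
Proof.
by rewrite /bil /ev trmx_delta mxE; apply: eq_bigr => y _; rewrite (mul_dl _ n) eqxx mul1r.
Qed.
Lemma bil_ve r v : bil v (ev r) = \sum_x v x 0 * Q x r.
Proof.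
by rewrite /bil /ev (mul_dr _ 1) eqxx mulr1 mxE; apply: eq_bigr => y _; rewrite mxE.
Qed.

Lemma qform_exp v a c r1 r2 :
  qform (v + a *: ev r1 + c *: ev r2) =
  qform v + a * (bil (ev r1) v + bil v (ev r1)) + c * (bil (ev r2) v + bil v (ev r2))
  + a ^+ 2 * Q r1 r1 + a * c * (Q r1 r2 + Q r2 r1) + c ^+ 2 * Q r2 r2.
Proof.
rewrite /qform -/(bil _ _) -/(bil v v) !(bilDl, bilDr, bilZl, bilZr) !bil_ee; ring.
Qed.

Lemma dv r s (v : 'cV[k]_n) : delta_mx r s *m v = v s 0 *: ev r.
Proof. by apply/matrixP => x y; rewrite (mul_dl n 1) !mxE (ord1 y) eqxx andbT mulrC. Qed.

Lemma Lsum r v : bil (ev r) v + bil v (ev r) = \sum_y (Q r y + Q y r) * v y 0.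
Proof. by rewrite bil_ev bil_ve -big_split; apply: eq_bigr => y _; rewrite /= mulrDl [v y 0 * _]mulrC. Qed.

Lemma natb0 (b : bool) : ~~ b -> (b%:R : k) = 0.
Proof. by move/negbTE->. Qed.
Lemma natb1 (b1 b2 : bool) : b1 || b2 -> ~~ (b1 && b2) -> (b1%:R + b2%:R : k) = 1.
Proof. by case: b1; case: b2; rewrite //= ?addr0 ?add0r. Qed.

Lemma Lpart (r : 'I_n) (v : 'cV[k]_n) :
  (r < n./2 + n./2)%N -> bil (ev r) v + bil v (ev r) = v (pt r) 0.
Proof.
move=> hr; rewrite Lsum (bigD1 (pt r)) //= big1 ?addr0.
  suff -> : Q r (pt r) + Q (pt r) r = 1 by rewrite mul1r.
  have := half_eq; rewrite !mxE /= /pn; case: ifP => hm h;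
  apply: natb1; case: (odd n) h => h /=; lia.
move=> y hy.
have hy' : (y : nat) <> pn r by move=> e; move: hy; rewrite (_ : y = pt r) ?eqxx //; apply: val_inj.
have := ltn_ord y; have := half_eq; move: hy'; rewrite !mxE /pn.
case: ifP => hm hy' h hyn; rewrite !natb0 ?addr0 ?mul0r //; case: (odd n) h => h /=; lia.
Qed.


Definition sx (r1 s1 r2 s2 : 'I_n) : 'M[k]_n := 1%:M + delta_mx r1 s1 - delta_mx r2 s2.

Lemma sx_det r1 s1 r2 s2 : r1 != s1 -> r2 != s2 -> s1 != r2 -> \det (sx r1 s1 r2 s2) = 1.
Proof.
move=> h1 h2 h3.
have -> : sx r1 s1 r2 s2 = tv r1 s1 1 *m tv r2 s2 (-1).
  rewrite /sx /tv !(mulmxDl, mulmxDr) !mul1mx !mulmx1 scale1r -scalemxAr.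
  rewrite mul_delta_mx_cond (negPf h3) mulr0n scaler0 addr0 scaleN1r.
  by rewrite addrAC.
by rewrite det_mulmx !det_tv // mulr1.
Qed.

Lemma sx_rank r1 s1 r2 s2 : r1 != r2 -> s1 != s2 -> \rank (1%:M - sx r1 s1 r2 s2) = 2%N.
Proof.
move=> h1 h2; have -> : 1%:M - sx r1 s1 r2 s2 = delta_mx r2 s2 - delta_mx r1 s1 by apply/matrixP => x y; rewrite !mxE; ring.
by rewrite rank2 // eq_sym.
Qed.

Lemma sx_v r1 s1 r2 s2 (v : 'cV[k]_n) :
  sx r1 s1 r2 s2 *m v = v + v s1 0 *: ev r1 + (- v s2 0) *: ev r2.
Proof. by rewrite /sx mulmxBl mulmxDl mul1mx !dv scaleNr. Qed.

Lemma sx_row r1 s1 r2 s2 (u : 'rV[k]_n) l :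
  (u *m sx r1 s1 r2 s2) 0 l = u 0 l + u 0 r1 * (s1 == l)%:R - u 0 r2 * (s2 == l)%:R.
Proof. by rewrite /sx mulmxBr mulmxDr mulmx1 ![((_ + _ : 'rV[k]_n) _ _)]mxE ![((- _ : 'rV[k]_n) _ _)]mxE !(mul_dr 1 n). Qed.

Definition tx (p q z : 'I_n) : 'M[k]_n :=
  1%:M - delta_mx q p - 2%:R *: delta_mx q z + delta_mx z p.

Lemma tx_det p q z : p != q -> q != z -> z != p -> \det (tx p q z) = 1.
Proof.
move=> h1 h2 h3.
have -> : tx p q z = tv q z (- 2%:R) *m (tv z p 1 *m tv q p 1).
  rewrite /tx /tv !(mulmxDl, mulmxDr) !mul1mx !mulmx1 !scale1r -!scalemxAl.
  rewrite !mul_delta_mx_cond eqxx (negPf h1) (eq_sym z q) (negPf h2) !mulr0n.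
  rewrite !mulmx0 !scaler0 !addr0 mulr1n.
  apply/matrixP => x y; rewrite !mxE. ring.
rewrite !det_mulmx !det_tv ?mulr1 //; by rewrite eq_sym.
Qed.

Lemma tx_v p q z (v : 'cV[k]_n) :
  tx p q z *m v = v + (- v p 0 - 2%:R * v z 0) *: ev q + v p 0 *: ev z.
Proof.
rewrite /tx !(mulmxDl, mulNmx) mul1mx -!scalemxAl !dv scalerA.
apply/matrixP => x y; rewrite !mxE; ring.
Qed.

Lemma tx_row p q z (u : 'rV[k]_n) l :
  (u *m tx p q z) 0 l = u 0 l - u 0 q * (p == l)%:R - 2%:R * u 0 q * (z == l)%:R
     + u 0 z * (p == l)%:R.
Proof.
rewrite /tx !(mulmxDr, mulmxN) mulmx1 -scalemxAr.
rewrite ![((_ + _ : 'rV[k]_n) _ _)]mxE ![((- _ : 'rV[k]_n) _ _)]mxE ![((_ *: _ : 'rV[k]_n) _ _)]mxE.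
rewrite !(mul_dr 1 n); ring.
Qed.

Lemma Q0 (x y : 'I_n) : ~~ (((x < n./2)%N && (y == (x + n./2)%N :> nat)) || [&& odd n, x == n.-1 :> nat & y == n.-1 :> nat]) -> Q x y = 0.
Proof. by move=> h; rewrite mxE natb0. Qed.


Lemma sx_q (ho : odd n = false) (m0 : (0 < n./2)%N) (r1 r2 : 'I_n) :
  ((r1 < n./2)%N = (r2 < n./2)%N) -> forall v,
  qform (sx r1 (pt r2) r2 (pt r1) *m v) = qform v.
Proof.
move=> hs v; have hh := half_eq; rewrite ho addn0 in hh.
have l1 := ltn_ord r1; have l2 := ltn_ord r2.
rewrite sx_v qform_exp !Lpart; try lia.
rewrite (Q0 r1 r1) ?(Q0 r1 r2) ?(Q0 r2 r1) ?(Q0 r2 r2); first by ring.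
all: rewrite ho /= ?andbF ?orbF; lia.
Qed.

Lemma so_sx (ho : odd n = false) (m0 : (0 < n./2)%N) (r1 r2 : 'I_n) :
  r1 != r2 -> ((r1 < n./2)%N = (r2 < n./2)%N) ->
  classical_group SOkind (sx r1 (pt r2) r2 (pt r1)).
Proof.
move=> hne hs; have hh := half_eq; rewrite ho addn0 in hh.
have l1 := ltn_ord r1; have l2 := ltn_ord r2.
move: hne; rewrite -val_eqE /= => hne.
have hd : \det (sx r1 (pt r2) r2 (pt r1)) = 1.
  apply: sx_det; ix.
split; first exact: unit_det1.
split; first exact: sx_q.
case: ifP => _ //; rewrite sx_rank //; ix.
Qed.

Section Odd.
Hypothesis ho : odd n.
Lemma zlt : (n.-1 < n)%N.
Proof. by case: n ho. Qed.
Definition zz : 'I_n := Ordinal zlt.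

Lemma Q1z : Q zz zz = 1.
Proof. by rewrite mxE /= ho !eqxx /= orbT. Qed.

Lemma Lz (v : 'cV[k]_n) : bil (ev zz) v + bil v (ev zz) = v zz 0 + v zz 0.
Proof.
rewrite Lsum (bigD1 zz) //= big1 ?addr0.
  by rewrite Q1z; ring.
move=> y hy; have hy' : (y : nat) <> n.-1.
  by move=> e; move: hy; rewrite (_ : y = zz) ?eqxx //; apply: val_inj.
have hh := half_eq; rewrite ho in hh.
have := ltn_ord y.
rewrite (Q0 zz y) ?(Q0 y zz); first by move=> _; ring.
all: rewrite ho /=; lia.
Qed.

Lemma tx_q (q : 'I_n) : (q < n./2 + n./2)%N -> forall v,
  qform (tx (pt q) q zz *m v) = qform v.
Proof.
move=> hq v; have hh := half_eq; rewrite ho in hh.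
rewrite tx_v qform_exp Lpart // Lz Q1z.
rewrite (Q0 q q) ?(Q0 q zz) ?(Q0 zz q); first by ring.
all: rewrite ho /=; lia.
Qed.

Lemma so_tx (q : 'I_n) : (q < n./2 + n./2)%N -> ~~ (2%N \in [pchar k]) ->
  classical_group SOkind (tx (pt q) q zz).
Proof.
move=> hq h2; have hh := half_eq; rewrite ho in hh.
have hd : \det (tx (pt q) q zz) = 1 by apply: tx_det; ix.
split; first exact: unit_det1.
split; first exact: tx_q.
by rewrite (negPf h2).
Qed.
End Odd.

End SO.


Local Notation diff u g j l := ((u *m g) 0 l * u 0 j - (u *m g) 0 j * u 0 l).

Lemma key_sl (n2 : (1 < n)%N) (u : 'rV[k]_n) j : u 0 j != 0 ->
  exists g, classical_group SLkind g /\ exists l, diff u g j l != 0.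
Proof.
move=> hj.
have hb : ((j == 0 :> nat) < n)%N by case: (j == 0 :> nat) => //; lia.
pose b : 'I_n := Ordinal hb.
have bj : b != j by rewrite -val_eqE /=; case: eqP => /= e; lia.
exists (tv j b 1); split.
  have hd : \det (tv j b 1) = 1 by apply: det_tv; rewrite eq_sym.
  by split; first exact: unit_det1.
exists b; rewrite !rowtv eqxx (negPf bj).
have -> : (u 0 b + 1 * u 0 j * 1%:R) * u 0 j - (u 0 j + 1 * u 0 j * 0%:R) * u 0 b
  = u 0 j * u 0 j by ring.
exact: mulf_neq0.
Qed.

Lemma key_sp (n2 : (1 < n)%N) (he : ~~ odd n) (u : 'rV[k]_n) j : u 0 j != 0 ->
  exists g, classical_group Spkind g /\ exists l, diff u g j l != 0.
Proof.
move=> hj.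
have bj : pt j != j.
  have hh := half_eq; rewrite (negPf he) in hh.
  have := ltn_ord j; ix.
exists (tv j (pt j) 1); split; first exact: sp_tv.
exists (pt j); rewrite !rowtv eqxx (negPf bj).
have -> : (u 0 (pt j) + 1 * u 0 j * 1%:R) * u 0 j - (u 0 j + 1 * u 0 j * 0%:R) * u 0 (pt j)
  = u 0 j * u 0 j by ring.
exact: mulf_neq0.
Qed.

Lemma pick_b (i : nat) : (1 < n./2)%N -> exists b : 'I_n, ((b < n./2)%N && (b != i :> nat)).
Proof.
move=> hm; have hh := half_eq.
have hb : ((i == 0)%N < n)%N by case: (i == 0)%N => //=; lia.
exists (Ordinal hb) => /=; case: eqP => /= e; lia.
Qed.

Lemma key_so_even (ho : odd n = false) (n3 : (3 <= n)%N) (u : 'rV[k]_n) j : u 0 j != 0 ->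
  exists g, classical_group SOkind g /\ exists l, diff u g j l != 0.
Proof.
move=> hj; have hh := half_eq; rewrite ho addn0 in hh.
have hm : (1 < n./2)%N by lia.
have lj := ltn_ord j.
case: (ltnP j (n./2)) => hjm.
- have [b /andP [hb hbj]] := pick_b j hm.
  have lb := ltn_ord b.
  exists (sx j (pt b) b (pt j)); split.
    apply: so_sx => //; try lia; by rewrite -val_eqE /= eq_sym.
  exists (pt b); rewrite !sx_row eqxx.
  have -> : (pt j == pt b) = false by apply/negbTE; ix.
  have -> : (pt b == j) = false by apply/negbTE; ix.
  have -> : (pt j == j) = false by apply/negbTE; ix.
  have -> : (u 0 (pt b) + u 0 j * 1%:R - u 0 b * 0%:R) * u 0 j -
     (u 0 j + u 0 j * 0%:R - u 0 b * 0%:R) * u 0 (pt b) = u 0 j * u 0 j by ring.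
  exact: mulf_neq0.
- have [b /andP [hb hbj]] := pick_b (pt j) hm.
  have lb := ltn_ord b.
  exists (sx (pt b) (pt j) j (pt (pt b))); split.
    apply: so_sx => //; try lia; first by move: hbj; ix.
    ix.
  exists b; rewrite !sx_row.
  have -> : (pt j == b) = false by apply/negbTE; move: hbj; ix.
  rewrite pt_pt ?eqxx; last by lia.
  have -> : (pt j == j) = false by apply/negbTE; ix.
  have -> : (b == j) = false by apply/negbTE; ix.
  have -> : (u 0 b + u 0 (pt b) * 0%:R - u 0 j * 1%:R) * u 0 j -
     (u 0 j + u 0 (pt b) * 0%:R - u 0 j * 0%:R) * u 0 b = - (u 0 j * u 0 j) by ring.
  by rewrite oppr_eq0; exact: mulf_neq0.
Qed.

Lemma two_nz : ~~ (2%N \in [pchar k]) -> (2%:R : k) != 0.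
Proof. by move=> h; apply: contraNneq h => e; rewrite inE /= e eqxx. Qed.

Lemma key_so_odd (ho : odd n) (h2 : ~~ (2%N \in [pchar k])) (n3 : (3 <= n)%N)
  (u : 'rV[k]_n) j : u 0 j != 0 ->
  exists g, classical_group SOkind g /\ exists j' l, diff u g j' l != 0.
Proof.
move=> hj; have hh := half_eq; rewrite ho in hh.
have t2 := two_nz h2.
have aux : forall q : 'I_n, (q < n./2 + n./2)%N -> u 0 q != 0 ->
    exists g, classical_group SOkind g /\ exists l, diff u g q l != 0.
  move=> q hq uq; exists (tx (pt q) q (zz ho)); split; first exact: so_tx.
  exists (zz ho); rewrite !tx_row eqxx.
  have -> : (pt q == zz ho) = false by apply/negbTE; ix.
  have -> : (pt q == q) = false by apply/negbTE; ix.
  have -> : (zz ho == q) = false by apply/negbTE; ix.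
  set a := u 0 q; set z := u 0 (zz ho).
  have -> : (z - a * 0%:R - 2%:R * a * 1%:R + z * 0%:R) * a -
    (a - a * 0%:R - 2%:R * a * 0%:R + z * 0%:R) * z = - (2%:R * (a * a)) by ring.
  by rewrite oppr_eq0 !mulf_neq0.
case: (ltnP j (n./2 + n./2)) => hjm.
  have [g [hg [l hl]]] := aux j hjm hj; exists g; split => //; exists j, l => //.
have hq : (n./2 < n)%N by lia.
pose q : 'I_n := Ordinal hq.
have hq2 : (q < n./2 + n./2)%N by rewrite /=; lia.
case: (eqVneq (u 0 q) 0) => uq; last first.
  have [g [hg [l hl]]] := aux q hq2 uq; exists g; split => //; exists q, l => //.
have jz : j = zz ho by apply: val_inj => /=; have := ltn_ord j; lia.
exists (tx (pt q) q (zz ho)); split; first exact: so_tx.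
exists j, (pt q); rewrite !tx_row eqxx jz.
have -> : (pt q == zz ho) = false by apply/negbTE; ix.
have -> : (zz ho == pt q) = false by apply/negbTE; ix.
rewrite uq; set a := u 0 (pt q); set z := u 0 (zz ho).
rewrite eqxx.
have -> : (a - 0 * true%:R - 2%:R * 0 * false%:R + z * true%:R) * z - (z - 0 * false%:R - 2%:R * 0 * true%:R + z * false%:R) * a = z * z by rewrite /=; ring.
by move: hj; rewrite jz => hj; rewrite mulf_neq0.
Qed.

Lemma key t : classical_admissible k n t ->
  forall (u : 'rV[k]_n) j, u 0 j != 0 ->
  exists g, classical_group t g /\ exists j' l, diff u g j' l != 0.
Proof.
case: t => /=.
- move=> n2 u j hj; have [g [hg [l hl]]] := key_sl n2 _ _ hj.
  by exists g; split => //; exists j, l.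
- move=> [n2 he] u j hj; have [g [hg [l hl]]] := key_sp n2 he _ _ hj.
  by exists g; split => //; exists j, l.
- move=> [n3 hn] u j hj; case ho: (odd n).
    apply: (key_so_odd _ _ n3 _ _ hj) => //; apply/negP => h; apply: hn; split => //.
  have [g [hg [l hl]]] := key_so_even ho n3 _ _ hj.
  by exists g; split => //; exists j, l.
Qed.
End Key.

Arguments key {k n t}.

Theorem lemma3p6 (k : closedFieldType) (t : classical_kind) (n e : nat)
    (c : 'I_e -> 'M[k]_n) (gam : 'I_e -> nat) :
  classical_admissible k n t ->
  (forall i, classical_group t (c i)) ->
  (forall i, largest_eigdim (c i) (gam i)) ->
  (n * (e - 1) < \sum_(i < e) gam i)%N ->
  forall x : 'I_e -> 'M[k]_n,
    (forall i, conj_class (@classical_group k n t) (c i) (x i)) ->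
    ~ zariski_dense (gen_by x) (@classical_group k n t).
Proof.
move=> adm hc hl hs x hx hd.
have [a ha] : exists a : 'I_e -> k, forall i, \rank (eigenspace (c i) (a i)) = gam i.
  apply: (@fin_all_exists _ (fun _ => k) (fun i a => \rank (eigenspace (c i) a) = gam i)).
  by move=> i; case: (hl i) => -[a ha] _; exists a.
have xu : forall i, x i \in unitmx.
  move=> i; case: (hx i) => g [gu _] ->.
  by case: (hc i) => cu _; rewrite !unitmx_mul unitmx_inv gu cu.
have hg : forall i, (gam i <= \rank (eigenspace (x i) (a i)))%N.
  move=> i; case: (hx i) => g [gu _] ->; rewrite -ha; exact: conj_eig.
have [u u0 hu] := common_eigvec hg hs.
have [j hj] : exists j, u 0 j != 0.
  case: (pickP (fun j => u 0 j != 0)) => [j hj|h0]; first by exists j.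
  case/negP: u0; apply/eqP/rowP => j; rewrite mxE; apply/eqP.
  by move: (h0 j) => /negbFE.
have [g [hG [j' [l hne]]]] := key adm _ _ hj.
suff h0 : forall h, gen_by x h -> mx_eval (lpoly u j' l) h = 0.
  by move: (hd _ h0 g hG); rewrite lpolyE => h1; move/eqP: hne.
move=> h hgen; have [lam hlam] := gen_eig u0 xu hu h hgen.
rewrite lpolyE hlam !mxE; ring.
Qed.
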